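(* Let $C_0(\mathbb{G})$ be the algebra of continuous complex-valued functions on $\mathbb{G}$ vanishing at infinity. Every closed ideal $I$ of $C_0(\mathbb{G})$ that is $\mathrm{Aut}(\mathbb{G})$-invariant (i.e. $f\circ H_\varphi\in I$ whenever $f\in I$ and $\varphi\in\mathrm{Aut}(\mathbb{D})$) can be written as $I(E)=\{f\in C_0(\mathbb{G}): f|_E\equiv0\}$, where $E=q^{-1}(\Lambda)$ for some closed subset $\Lambda$ of $[0,1)$.
   Context: $\mathbb{D}$ is the open unit disc and $\mathrm{Aut}(\mathbb{D})$ its holomorphic automorphism group. $\mathbb{G}=\{(z_1+z_2,z_1z_2):z_1,z_2\in\mathbb{D}\}$; $\mathrm{Aut}(\mathbb{G})=\{H_\varphi:\varphi\in\mathrm{Aut}(\mathbb{D})\}$ with $H_\varphi(z_1+z_2,z_1z_2)=(\varphi(z_1)+\varphi(z_2),\varphi(z_1)\varphi(z_2))$. The map $q:\mathbb{G}\to[0,1)$ is $q(z_1+z_2,z_1z_2)=\left|\frac{z_1-z_2}{1-\overline{z_1}z_2}\right|$. *)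

(* Defs.v *)
From Stdlib Require Import Reals List.
From Coquelicot Require Import Coquelicot.

Open Scope R_scope.

Definition inD (z : C) : Prop := Cmod z < 1.

Definition holo_on_D (f : C -> C) : Prop :=
  forall z, inD z -> exists l : C, is_derive f z l.

Definition AutD (phi : C -> C) : Prop :=
  holo_on_D phi /\ (forall z, inD z -> inD (phi z)) /\
  exists psi : C -> C, holo_on_D psi /\ (forall z, inD z -> inD (psi z)) /\
    (forall z, inD z -> psi (phi z) = z) /\
    (forall z, inD z -> phi (psi z) = z).

Definition symm (z1 z2 : C) : C * C := (Cplus z1 z2, Cmult z1 z2).

Definition inG (w : C * C) : Prop :=
  exists z1 z2, inD z1 /\ inD z2 /\ w = symm z1 z2.

Definition Gpt : Type := { w : C * C | inG w }.

(* H_phi as a relation on G: H_phi(z1+z2, z1 z2) = (phi z1 + phi z2, phi z1 phi z2) *)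
Definition Hrel (phi : C -> C) (w w' : Gpt) : Prop :=
  exists z1 z2, inD z1 /\ inD z2 /\
    proj1_sig w = symm z1 z2 /\ proj1_sig w' = symm (phi z1) (phi z2).

(* E = q^{-1}(Lambda), q(z1+z2, z1 z2) = |(z1 - z2)/(1 - conj(z1) z2)|
   (q is well defined, so any representation may be used) *)
Definition qval (z1 z2 : C) : R :=
  Cmod (Cdiv (Cminus z1 z2) (Cminus (RtoC 1) (Cmult (Cconj z1) z2))).

Definition qpre (Lam : R -> Prop) (w : Gpt) : Prop :=
  exists z1 z2, inD z1 /\ inD z2 /\ proj1_sig w = symm z1 z2 /\ Lam (qval z1 z2).

Definition dist2 (w w' : C * C) : R :=
  Rmax (Cmod (Cminus (fst w) (fst w'))) (Cmod (Cminus (snd w) (snd w'))).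

Definition open2 (U : C * C -> Prop) : Prop :=
  forall w, U w -> exists r, 0 < r /\ forall w', dist2 w w' < r -> U w'.

Definition compact2 (K : C * C -> Prop) : Prop :=
  forall (I : Type) (U : I -> C * C -> Prop),
    (forall i, open2 (U i)) -> (forall w, K w -> exists i, U i w) ->
    exists l : list I, forall w, K w -> exists i, In i l /\ U i w.

Definition contG (f : Gpt -> C) : Prop :=
  forall (w : Gpt) (eps : R), 0 < eps -> exists delta, 0 < delta /\
    forall w' : Gpt, dist2 (proj1_sig w) (proj1_sig w') < delta ->
      Cmod (Cminus (f w) (f w')) < eps.

Definition vanish_at_inf (f : Gpt -> C) : Prop :=
  forall eps : R, 0 < eps -> exists K : C * C -> Prop,
    compact2 K /\ (forall w, K w -> inG w) /\
    forall w : Gpt, ~ K (proj1_sig w) -> Cmod (f w) < eps.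

Definition C0G (f : Gpt -> C) : Prop := contG f /\ vanish_at_inf f.

Definition closed_ideal (I : (Gpt -> C) -> Prop) : Prop :=
  (forall f, I f -> C0G f) /\
  I (fun _ => RtoC 0) /\
  (forall f g, I f -> I g -> I (fun w => Cplus (f w) (g w))) /\
  (forall (c : C) f, I f -> I (fun w => Cmult c (f w))) /\
  (forall f g, I f -> C0G g -> I (fun w => Cmult (g w) (f w))) /\
  (forall f, C0G f ->
     (forall eps, 0 < eps -> exists g, I g /\
        forall w, Cmod (Cminus (f w) (g w)) <= eps) -> I f).

Definition AutG_invariant (I : (Gpt -> C) -> Prop) : Prop :=
  forall f phi, I f -> AutD phi ->
    forall g : Gpt -> C, (forall w w', Hrel phi w w' -> g w = f w') -> I g.

Definition closed_in_01 (Lam : R -> Prop) : Prop :=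
  (forall x, Lam x -> 0 <= x < 1) /\
  (forall x, 0 <= x < 1 ->
     (forall eps, 0 < eps -> exists y, Lam y /\ Rabs (x - y) < eps) -> Lam x).

Definition ideal_of (E : Gpt -> Prop) (f : Gpt -> C) : Prop :=
  C0G f /\ forall w, E w -> f w = RtoC 0.

(* Main.v *)
Require Import Defs.
From Stdlib Require Import Reals List.
From Coquelicot Require Import Coquelicot.
From Stdlib Require Import Lra Psatz Classical ClassicalEpsilon ProofIrrelevance FunctionalExtensionality.
Open Scope R_scope.

Lemma Cmod_sq (x : C) : Cmod x ^ 2 = fst x ^ 2 + snd x ^ 2.
Proof. unfold Cmod. rewrite pow2_sqrt; [reflexivity|nra]. Qed.

Lemma Cmod_lt_sq (x y : C) : fst x ^ 2 + snd x ^ 2 < fst y ^ 2 + snd y ^ 2 -> Cmod x < Cmod y.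
Proof. intro H. unfold Cmod. apply sqrt_lt_1_alt. split; [nra|exact H]. Qed.

Lemma is_derive_Cinv (z0 : C) : z0 <> 0%C ->
  is_derive (K:=C_AbsRing) (V:=AbsRing_NormedModule C_AbsRing) (fun z : C => Cinv z) z0 (Copp (Cinv (Cmult z0 z0))).
Proof.
  intro Hz. split.
  - apply is_linear_scal_l.
  - intros x Hx. apply (is_filter_lim_locally_unique (K:=C_AbsRing) (V:=AbsRing_NormedModule C_AbsRing)) in Hx. subst x.
    intro eps.
    assert (Hm : 0 < Cmod z0) by (apply Cmod_gt_0; exact Hz).
    assert (Hr : 0 < Rmin (Cmod z0 / 2) (eps * Cmod z0 ^ 3 / 2)).
    { apply Rmin_pos. lra. pose proof (cond_pos eps). apply Rmult_lt_0_compat; [|lra].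
      apply Rmult_lt_0_compat; [lra| apply pow_lt; lra]. }
    exists (mkposreal _ Hr). intros y Hy. change (Cmod (Cminus y z0) < Rmin (Cmod z0 / 2) (eps * Cmod z0 ^ 3 / 2)) in Hy.
    assert (H1 := Rmin_l (Cmod z0 / 2) (eps * Cmod z0 ^ 3 / 2)).
    assert (H2 := Rmin_r (Cmod z0 / 2) (eps * Cmod z0 ^ 3 / 2)).
    assert (Hy0 : Cmod z0 / 2 <= Cmod y).
    { assert (E: z0 = Cplus y (Cminus z0 y)) by ring.
      assert (T := Cmod_triangle y (Cminus z0 y)). rewrite <- E in T.
      assert (E2: Cminus z0 y = Copp (Cminus y z0)) by ring.
      rewrite E2, Cmod_opp in T. lra. }
    assert (Hyn : @eq C y (RtoC 0) -> False). { intro E. subst y. rewrite Cmod_0 in Hy0. lra. }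
    change (norm (minus (minus (/ y) (/ z0)) (scal (minus y z0) (Copp (/ (z0 * z0))))))%C
      with (Cmod (Cminus (Cminus (/ y) (/ z0)) (Cmult (Cminus y z0) (Copp (/ (z0 * z0))))))%C.
    change (norm (minus y z0)) with (Cmod (Cminus y z0)).
    replace (Cminus (Cminus (/ y) (/ z0)) (Cmult (Cminus y z0) (Copp (/ (z0 * z0)))))%C
      with (Cmult (Cminus y z0) (Cmult (Cminus y z0) (/ (y * (z0 * z0)))))%C
      by (field; auto).
    rewrite !Cmod_mult, Cmod_inv, !Cmod_mult.
    2: { intro E. apply (f_equal Cmod) in E. rewrite Cmod_0, !Cmod_mult in E.
         assert (0 < Cmod y * (Cmod z0 * Cmod z0)) by (apply Rmult_lt_0_compat; [lra|nra]). lra. }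
    set (d := Cmod (Cminus y z0)). assert (0 <= d) by apply Cmod_ge_0.
    rewrite Rmult_comm. apply Rmult_le_compat_r; [exact H|].
    apply Rle_trans with (d * / (Cmod z0 / 2 * (Cmod z0 * Cmod z0))).
    + apply Rmult_le_compat_l; [exact H|]. apply Rinv_le_contravar.
      * apply Rmult_lt_0_compat; [lra|nra].
      * apply Rmult_le_compat_r; nra.
    + apply Rle_trans with ((eps * Cmod z0 ^ 3 / 2) * / (Cmod z0 / 2 * (Cmod z0 * Cmod z0))).
      * apply Rmult_le_compat_r. apply Rlt_le, Rinv_0_lt_compat. apply Rmult_lt_0_compat; [lra|nra]. unfold d; lra.
      * right. field. lra.
Qed.

Definition Mob (u a : C) (z : C) : C :=
  Cdiv (Cplus (Cmult u z) a) (Cplus 1 (Cmult (Cmult (Cconj a) u) z)).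

Lemma Cmod_lt1_sq (x : C) : Cmod x < 1 -> fst x ^ 2 + snd x ^ 2 < 1.
Proof. intro H. rewrite <- Cmod_sq. pose proof (Cmod_ge_0 x). nra. Qed.

Lemma mob_key (u a z : C) : Cmod u = 1 -> Cmod a < 1 -> Cmod z < 1 ->
  Cmod (Cplus (Cmult u z) a) < Cmod (Cplus 1 (Cmult (Cmult (Cconj a) u) z)).
Proof.
  intros Hu Ha Hz.
  assert (Hv : Cmod (Cmult u z) < 1) by (rewrite Cmod_mult, Hu; lra).
  replace (Cmult (Cmult (Cconj a) u) z) with (Cmult (Cconj a) (Cmult u z)) by ring.
  apply Cmod_lt1_sq in Hv. apply Cmod_lt1_sq in Ha.
  destruct (Cmult u z) as [v1 v2]. destruct a as [a1 a2].
  apply Cmod_lt_sq. simpl in *. nra.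
Qed.

Lemma mob_den_nz (u a z : C) : Cmod u = 1 -> Cmod a < 1 -> Cmod z < 1 ->
  Cplus 1 (Cmult (Cmult (Cconj a) u) z) <> 0%C.
Proof.
  intros Hu Ha Hz E. pose proof (mob_key u a z Hu Ha Hz) as K. rewrite E, Cmod_0 in K.
  pose proof (Cmod_ge_0 (Cplus (Cmult u z) a)). lra.
Qed.

Lemma mob_in_D (u a z : C) : Cmod u = 1 -> Cmod a < 1 -> inD z -> inD (Mob u a z).
Proof.
  unfold inD, Mob. intros Hu Ha Hz.
  pose proof (mob_den_nz u a z Hu Ha Hz) as Hn.
  pose proof (mob_key u a z Hu Ha Hz) as K.
  rewrite Cmod_div by exact Hn.
  apply Cmod_gt_0 in Hn.
  apply Rmult_lt_reg_r with (Cmod (Cplus 1 (Cmult (Cmult (Cconj a) u) z))); [exact Hn|].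
  unfold Rdiv. rewrite Rmult_assoc, Rinv_l by lra. lra.
Qed.


Notation CK := (AbsRing_NormedModule C_AbsRing).

Lemma conv_der (f : C -> C) z l : @is_derive C_AbsRing CK f z l -> @is_derive C_AbsRing C_NormedModule f z l.
Proof. intros [[H1 H2 H3] H4]. split. split. exact H1. exact H2. exact H3. exact H4. Qed.

Lemma der_affine (p q z : C) : exists l, @is_derive C_AbsRing CK (fun t : C => Cplus (Cmult p t) q) z l.
Proof.
  eexists. eapply (is_derive_ext (K:=C_AbsRing) (V:=CK) (fun t : C => plus (mult p t) q)).
  { intro t; reflexivity. }
  apply (is_derive_plus (K:=C_AbsRing) (V:=CK)).
  - apply (is_derive_mult (K:=C_AbsRing) (fun _ => p) (fun t => t)).
    + apply (is_derive_const (K:=C_AbsRing) (V:=CK)).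
    + apply (is_derive_id (K:=C_AbsRing)).
    + intros; apply Cmult_comm.
  - apply (is_derive_const (K:=C_AbsRing) (V:=CK)).
Qed.

Lemma mob_holo (u a : C) : Cmod u = 1 -> Cmod a < 1 -> holo_on_D (Mob u a).
Proof.
  intros Hu Ha z Hz.
  pose proof (mob_den_nz u a z Hu Ha Hz) as Hn.
  destruct (der_affine u a z) as [l1 D1].
  destruct (der_affine (Cmult (Cconj a) u) 1 z) as [l2 D2].
  eexists. apply conv_der.
  eapply (is_derive_ext (K:=C_AbsRing) (V:=CK)
    (fun t : C => mult (Cplus (Cmult u t) a) (Cinv (Cplus (Cmult (Cmult (Cconj a) u) t) 1)))).
  { intro t; unfold Mob, Cdiv. change (mult ?x ?y) with (Cmult x y). rewrite (Cplus_comm _ 1). reflexivity. }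
  apply (is_derive_mult (K:=C_AbsRing)).
  - exact D1.
  - eapply (is_derive_comp (K:=C_AbsRing) (V:=CK) (fun t : C => Cinv t)).
    + apply is_derive_Cinv. rewrite Cplus_comm. exact Hn.
    + exact D2.
  - intros; apply Cmult_comm.
Qed.

Lemma unit_nz (u : C) : Cmod u = 1 -> u <> 0%C.
Proof. intros H E. subst. rewrite Cmod_0 in H. lra. Qed.

Lemma conj_unit (u : C) : Cmod u = 1 -> Cconj u = Cinv u.
Proof.
  intro H. pose proof (unit_nz u H) as Hn.
  pose proof (Cmod2_conj u) as E. rewrite H in E.
  replace (Cconj u) with (Cmult (Cinv u) (Cmult u (Cconj u))) by (field; exact Hn).
  rewrite <- E. replace (1 ^ 2) with 1 by ring. ring.
Qed.

Lemma Cmult_nz (x y : C) : x <> 0%C -> y <> 0%C -> Cmult x y <> 0%C.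
Proof.
  intros Hx Hy E. apply (f_equal Cmod) in E. rewrite Cmod_mult, Cmod_0 in E.
  apply Cmod_gt_0 in Hx. apply Cmod_gt_0 in Hy. nra.
Qed.

Lemma mob_inv (u a z : C) : Cmod u = 1 -> Cmod a < 1 -> inD z ->
  Mob (Cconj u) (Copp (Cmult (Cconj u) a)) (Mob u a z) = z.
Proof.
  intros Hu Ha Hz.
  pose proof (mob_den_nz u a z Hu Ha Hz) as Hn.
  pose proof (unit_nz u Hu) as Hu0.
  assert (Haa : Cminus 1 (Cmult (Cconj a) a) <> 0%C).
  { rewrite Cmult_comm, <- Cmod2_conj. intro E. 
    assert (Cmod a ^ 2 < 1). { pose proof (Cmod_ge_0 a). nra. }
    injection E. intros. lra. }
  unfold Mob. rewrite Copp_conj, Cmult_conj, Cconj_conj.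
  rewrite (conj_unit u Hu).
  set (ca := Cconj a) in *.
  field. split; [|split]; auto.
  replace (u * (1 + ca * u * z) + - (u * ca) * (u * z + a))%C with (Cmult u (Cminus 1 (Cmult ca a))) by ring.
  apply Cmult_nz; auto.
Qed.

Lemma mob_aut (u a : C) : Cmod u = 1 -> Cmod a < 1 -> AutD (Mob u a).
Proof.
  intros Hu Ha.
  assert (Hu' : Cmod (Cconj u) = 1) by (rewrite Cmod_conj; exact Hu).
  assert (Ha' : Cmod (Copp (Cmult (Cconj u) a)) < 1) by (rewrite Cmod_opp, Cmod_mult, Hu'; lra).
  split; [apply mob_holo; auto|]. split; [intros; apply mob_in_D; auto|].
  exists (Mob (Cconj u) (Copp (Cmult (Cconj u) a))).
  split; [apply mob_holo; auto|]. split; [intros; apply mob_in_D; auto|].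
  split; [intros; apply mob_inv; auto|].
  intros z Hz. pose proof (mob_inv _ _ z Hu' Ha' Hz) as E.
  rewrite Cconj_conj in E.
  replace (Copp (Cmult u (Copp (Cmult (Cconj u) a)))) with a in E; [exact E|].
  rewrite (conj_unit u Hu). field. apply unit_nz; auto.
Qed.

Lemma one_minus_nz (p : C) : Cmod p < 1 -> Cminus 1 p <> 0%C.
Proof.
  intros H E. assert (p = 1%C). { replace p with (Cminus 1 (Cminus 1 p)) by ring. rewrite E. ring. }
  subst. rewrite Cmod_1 in H. lra.
Qed.

Lemma mob_target (u z1 z2 : C) (t : R) : inD z1 -> inD z2 ->
  Cmult u (RtoC t) = Cdiv (Cminus z2 z1) (Cminus 1 (Cmult (Cconj z1) z2)) ->
  Mob u z1 (RtoC t) = z2.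
Proof.
  intros H1 H2 E. unfold Mob.
  replace (Cmult (Cmult (Cconj z1) u) (RtoC t)) with (Cmult (Cconj z1) (Cmult u (RtoC t))) by ring.
  rewrite E.
  assert (N1 : Cminus 1 (Cmult (Cconj z1) z2) <> 0%C).
  { apply one_minus_nz. rewrite Cmod_mult, Cmod_conj. unfold inD in *.
    pose proof (Cmod_ge_0 z1). pose proof (Cmod_ge_0 z2). nra. }
  assert (N2 : Cminus 1 (Cmult (Cconj z1) z1) <> 0%C).
  { apply one_minus_nz. rewrite Cmod_mult, Cmod_conj. unfold inD in *.
    pose proof (Cmod_ge_0 z1). nra. }
  set (c := Cconj z1) in *.
  field. split; auto.
  replace (1 - c * z2 + c * (z2 - z1))%C with (Cminus 1 (Cmult c z1)) by ring. exact N2.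
Qed.

Lemma transit (z1 z2 : C) : inD z1 -> inD z2 ->
  exists u, Cmod u = 1 /\ Mob u z1 (RtoC 0) = z1 /\ Mob u z1 (RtoC (qval z1 z2)) = z2.
Proof.
  intros H1 H2.
  set (m := Cdiv (Cminus z2 z1) (Cminus 1 (Cmult (Cconj z1) z2))).
  assert (Hq : qval z1 z2 = Cmod m).
  { unfold qval, m. rewrite <- Cmod_opp. f_equal. unfold Cdiv. ring. }
  assert (E0 : forall u, Mob u z1 (RtoC 0) = z1).
  { intro u. unfold Mob. replace (Cplus 1 (Cmult (Cmult (Cconj z1) u) (RtoC 0))) with (RtoC 1) by ring.
    replace (Cplus (Cmult u (RtoC 0)) z1) with z1 by ring. field.
  }
  destruct (Req_dec (Cmod m) 0) as [Hm|Hm].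
  - exists 1%C. split; [apply Cmod_1|]. split; [apply E0|].
    apply mob_target; auto. rewrite Hq, Hm. apply Cmod_eq_0 in Hm. fold m. rewrite Hm. ring.
  - assert (Hm' : RtoC (Cmod m) <> 0%C) by (intro E; injection E; intros; lra).
    exists (Cmult m (Cinv (RtoC (Cmod m)))). split; [|split; [apply E0|]].
    + rewrite Cmod_mult, Cmod_inv by exact Hm'. rewrite Cmod_R, Rabs_pos_eq by apply Cmod_ge_0.
      field. exact Hm.
    + apply mob_target; auto. rewrite Hq. fold m. field. exact Hm'.
Qed.


Definition contR (a : Gpt -> R) : Prop :=
  forall (w : Gpt) (eps : R), 0 < eps -> exists delta, 0 < delta /\
    forall w' : Gpt, dist2 (proj1_sig w) (proj1_sig w') < delta -> Rabs (a w - a w') < eps.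

Lemma Cmod_sub_sym (x y : C) : Cmod (Cminus x y) = Cmod (Cminus y x).
Proof. rewrite <- Cmod_opp. f_equal. ring. Qed.

Lemma Cmod_rev_tri (x y : C) : Rabs (Cmod x - Cmod y) <= Cmod (Cminus x y).
Proof.
  pose proof (Cmod_triangle (Cminus x y) y) as T1.
  pose proof (Cmod_triangle (Cminus y x) x) as T2.
  replace (Cplus (Cminus x y) y) with x in T1 by ring.
  replace (Cplus (Cminus y x) x) with y in T2 by ring.
  rewrite Cmod_sub_sym in T2. unfold Rabs. destruct (Rcase_abs _); lra.
Qed.

Lemma cont_conj (g : Gpt -> C) : contG g -> contG (fun w => Cconj (g w)).
Proof.
  intros H w eps He. destruct (H w eps He) as (d & Hd & Hw). exists d. split; auto.
  intros w' Hw'. rewrite <- Cminus_conj, Cmod_conj. auto.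
Qed.

Lemma cont_RtoC (a : Gpt -> R) : contR a -> contG (fun w => RtoC (a w)).
Proof.
  intros H w eps He. destruct (H w eps He) as (d & Hd & Hw). exists d. split; auto.
  intros w' Hw'. replace (Cminus (RtoC (a w)) (RtoC (a w'))) with (RtoC (a w - a w'))
    by (unfold Cminus, Cplus, Copp, RtoC; simpl; f_equal; ring).
  rewrite Cmod_R. auto.
Qed.

Lemma cont_ofC (a : Gpt -> R) : contG (fun w => RtoC (a w)) -> contR a.
Proof.
  intros H w eps He. destruct (H w eps He) as (d & Hd & Hw). exists d. split; auto.
  intros w' Hw'. specialize (Hw w' Hw').
  replace (Cminus (RtoC (a w)) (RtoC (a w'))) with (RtoC (a w - a w')) in Hw
    by (unfold Cminus, Cplus, Copp, RtoC; simpl; f_equal; ring).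
  rewrite Cmod_R in Hw. auto.
Qed.

Lemma contR_plus_const (c : R) (a : Gpt -> R) : contR a -> contR (fun w => c + a w).
Proof.
  intros H w eps He. destruct (H w eps He) as (d & Hd & Hw). exists d. split; auto.
  intros w' Hw'. replace (c + a w - (c + a w')) with (a w - a w') by ring. auto.
Qed.

Lemma contR_inv (a : Gpt -> R) (m : R) : 0 < m -> (forall w, m <= a w) -> contR a ->
  contR (fun w => / a w).
Proof.
  intros Hm Hb H w eps He.
  destruct (H w (eps * m * m)) as (d & Hd & Hw).
  { apply Rmult_lt_0_compat; [apply Rmult_lt_0_compat|]; lra. }
  exists d. split; auto. intros w' Hw'. specialize (Hw w' Hw').
  pose proof (Hb w). pose proof (Hb w').
  replace (/ a w - / a w') with ((a w' - a w) / (a w * a w')) by (field; lra).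
  unfold Rdiv. rewrite Rabs_mult, Rabs_inv, (Rabs_pos_eq (a w * a w')) by nra.
  rewrite <- Rabs_Ropp in Hw. replace (- (a w - a w')) with (a w' - a w) in Hw by ring.
  apply Rmult_lt_reg_r with (a w * a w'); [nra|].
  rewrite Rmult_assoc, Rinv_l by nra.
  assert (m * m <= a w * a w') by (apply Rmult_le_compat; lra).
  assert (eps * (m * m) <= eps * (a w * a w')) by (apply Rmult_le_compat_l; lra).
  nra.
Qed.

Lemma cont_mult (f g : Gpt -> C) : contG f -> contG g -> contG (fun w => Cmult (f w) (g w)).
Proof.
  intros Hf Hg w eps He.
  set (A := Cmod (f w) + 1). set (B := Cmod (g w) + 1).
  assert (HA : 0 < A) by (pose proof (Cmod_ge_0 (f w)); unfold A; lra).
  assert (HB : 0 < B) by (pose proof (Cmod_ge_0 (g w)); unfold B; lra).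
  destruct (Hf w (eps / (2 * B))) as (d1 & Hd1 & H1).
  { apply Rdiv_lt_0_compat; lra. }
  destruct (Hg w (Rmin 1 (eps / (2 * A)))) as (d2 & Hd2 & H2).
  { apply Rmin_pos; [lra|]. apply Rdiv_lt_0_compat; lra. }
  exists (Rmin d1 d2). split; [apply Rmin_pos; auto|].
  intros w' Hw'.
  assert (E1 := H1 w' (Rlt_le_trans _ _ _ Hw' (Rmin_l _ _))).
  assert (E2 := H2 w' (Rlt_le_trans _ _ _ Hw' (Rmin_r _ _))).
  assert (E2a := Rlt_le_trans _ _ _ E2 (Rmin_l _ _)).
  assert (E2b := Rlt_le_trans _ _ _ E2 (Rmin_r _ _)).
  replace (Cminus (Cmult (f w) (g w)) (Cmult (f w') (g w')))
    with (Cplus (Cmult (f w) (Cminus (g w) (g w'))) (Cmult (Cminus (f w) (f w')) (g w'))) by ring.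
  eapply Rle_lt_trans; [apply Cmod_triangle|]. rewrite !Cmod_mult.
  assert (Bg : Cmod (g w') <= B).
  { pose proof (Cmod_rev_tri (g w) (g w')) as RT. unfold B. unfold Rabs in RT; destruct (Rcase_abs _); lra. }
  assert (T1 : Cmod (f w) * Cmod (Cminus (g w) (g w')) <= A * (eps / (2 * A))).
  { assert (Cmod (f w) <= A) by (unfold A; lra).
    apply Rmult_le_compat; try apply Cmod_ge_0; lra. }
  assert (T2 : Cmod (Cminus (f w) (f w')) * Cmod (g w') <= (eps / (2 * B)) * B).
  { apply Rmult_le_compat; try apply Cmod_ge_0; lra. }
  assert (A * (eps / (2 * A)) = eps / 2) by (field; lra).
  assert (eps / (2 * B) * B = eps / 2) by (field; lra).
  assert (Cmod (Cminus (f w) (f w')) * Cmod (g w') < eps / 2 \/ Cmod (f w) * Cmod (Cminus (g w) (g w')) < eps / 2).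
  { right. pose proof (Cmod_ge_0 (f w)). 
    destruct (Req_dec (Cmod (f w)) 0) as [Z|Z]. rewrite Z. lra.
    apply Rlt_le_trans with (Cmod (f w) * (eps / (2 * A))).
    apply Rmult_lt_compat_l; lra.
    apply Rle_trans with (A * (eps / (2 * A))); [|lra].
    assert (Cmod (f w) <= A) by (unfold A; lra).
    apply Rmult_le_compat_r; [apply Rlt_le, Rdiv_lt_0_compat; lra| lra]. }
  lra.
Qed.

Lemma vanish_le (f g : Gpt -> C) : vanish_at_inf f ->
  (forall eps, 0 < eps -> exists d, 0 < d /\ forall w, Cmod (f w) < d -> Cmod (g w) < eps) ->
  vanish_at_inf g.
Proof.
  intros Hf H eps He. destruct (H eps He) as (d & Hd & Hw).
  destruct (Hf d Hd) as (K & HK & HKG & HKo). exists K. split; auto.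
Qed.

Lemma dist2_refl (p : C * C) : dist2 p p = 0.
Proof.
  unfold dist2. replace (Cminus (fst p) (fst p)) with (RtoC 0) by ring.
  replace (Cminus (snd p) (snd p)) with (RtoC 0) by ring. rewrite Cmod_0. unfold Rmax.
  destruct (Rle_dec 0 0); lra.
Qed.

Lemma dist2_tri (a b c : C * C) : dist2 a c <= dist2 a b + dist2 b c.
Proof.
  unfold dist2.
  pose proof (Cmod_triangle (Cminus (fst a) (fst b)) (Cminus (fst b) (fst c))) as T1.
  pose proof (Cmod_triangle (Cminus (snd a) (snd b)) (Cminus (snd b) (snd c))) as T2.
  replace (Cplus (Cminus (fst a) (fst b)) (Cminus (fst b) (fst c))) with (Cminus (fst a) (fst c)) in T1 by ring.
  replace (Cplus (Cminus (snd a) (snd b)) (Cminus (snd b) (snd c))) with (Cminus (snd a) (snd c)) in T2 by ring.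
  apply Rmax_lub.
  - eapply Rle_trans; [exact T1|]. apply Rplus_le_compat; apply Rmax_l.
  - eapply Rle_trans; [exact T2|]. apply Rplus_le_compat; apply Rmax_r.
Qed.

Lemma fold_nn {T : Type} (t : T -> R) (l : list T) : (forall i, 0 <= t i) ->
  0 <= fold_right (fun i acc => t i + acc) 0 l.
Proof. intro H. induction l as [|i l IH]; simpl; [lra|]. pose proof (H i). lra. Qed.

Lemma fold_ge {T : Type} (t : T -> R) (l : list T) (i : T) : (forall i, 0 <= t i) -> In i l ->
  t i <= fold_right (fun i acc => t i + acc) 0 l.
Proof.
  intros H Hi. induction l as [|j l IH]; simpl in *; [contradiction|].
  destruct Hi as [<-|Hi].
  - pose proof (fold_nn t l H). lra.
  - pose proof (IH Hi). pose proof (H j). lra.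
Qed.

Definition Zc (I : (Gpt -> C) -> Prop) (p : C * C) : Prop :=
  forall f, I f -> forall v : Gpt, proj1_sig v = p -> f v = 0%C.

Lemma symm_uniq (z1 z2 a b : C) : symm z1 z2 = symm a b ->
  (a = z1 /\ b = z2) \/ (a = z2 /\ b = z1).
Proof.
  intro E. pose proof (f_equal fst E) as E1. pose proof (f_equal snd E) as E2.
  change (Cplus z1 z2 = Cplus a b) in E1. change (Cmult z1 z2 = Cmult a b) in E2.
  assert (P : Cmult (Cminus a z1) (Cminus a z2) = 0%C).
  { replace (Cmult (Cminus a z1) (Cminus a z2)) with
      (Cplus (Cminus (Cmult a a) (Cmult a (Cplus z1 z2))) (Cmult z1 z2)) by ring.
    rewrite E1, E2. ring. }
  destruct (classic (Cminus a z1 = 0%C)) as [H|H].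
  - left. assert (a = z1) by (replace a with (Cplus (Cminus a z1) z1) by ring; rewrite H; ring).
    subst a. split; auto. replace b with (Cminus (Cplus z1 b) z1) by ring. rewrite <- E1. ring.
  - right. destruct (classic (Cminus a z2 = 0%C)) as [H'|H'].
    + assert (a = z2) by (replace a with (Cplus (Cminus a z2) z2) by ring; rewrite H'; ring).
      subst a. split; auto. replace b with (Cminus (Cplus z2 b) z2) by ring. rewrite <- E1. ring.
    + exfalso. exact (Cmult_nz _ _ H H' P).
Qed.

Lemma symm_comm (a b : C) : symm a b = symm b a.
Proof. unfold symm. f_equal; ring. Qed.

Lemma Gpt_eq (w1 w2 : Gpt) : proj1_sig w1 = proj1_sig w2 -> w1 = w2.
Proof. destruct w1, w2; simpl; intro; subst; f_equal; apply proof_irrelevance. Qed.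

Lemma Hrel_fun phi w w1 w2 : Hrel phi w w1 -> Hrel phi w w2 -> w1 = w2.
Proof.
  intros (a & b & Ha & Hb & Hw & H1) (c & d & Hc & Hd & Hw' & H2).
  apply Gpt_eq. rewrite H1, H2. rewrite Hw in Hw'.
  destruct (symm_uniq a b c d Hw') as [[-> ->]|[-> ->]]; auto using symm_comm.
Qed.

Lemma Z_invariant I (HI : AutG_invariant I) phi z1 z2 :
  AutD phi -> inD z1 -> inD z2 -> Zc I (symm z1 z2) -> Zc I (symm (phi z1) (phi z2)).
Proof.
  intros Hphi H1 H2 HZ f Hf v Hv.
  set (g := fun w : Gpt =>
    match excluded_middle_informative (exists w', Hrel phi w w') with
    | left H => f (proj1_sig (constructive_indefinite_description _ H))
    | right _ => 0%C end).
  assert (Hg : forall w w', Hrel phi w w' -> g w = f w').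
  { intros w w' Hr. unfold g. destruct (excluded_middle_informative _) as [H|H].
    - destruct (constructive_indefinite_description _ H) as [w'' Hw'']. simpl.
      rewrite (Hrel_fun phi w w'' w' Hw'' Hr). reflexivity.
    - exfalso. apply H. exists w'. exact Hr. }
  assert (Ig : I g) by exact (HI f phi Hf Hphi g Hg).
  assert (G0 : inG (symm z1 z2)) by (exists z1, z2; auto).
  set (w0 := exist inG (symm z1 z2) G0 : Gpt).
  rewrite <- (Hg w0 v).
  - apply (HZ g Ig w0). reflexivity.
  - exists z1, z2. auto.
Qed.

Lemma inD0 : inD (RtoC 0).
Proof. unfold inD. rewrite Cmod_0. lra. Qed.

Lemma qval_bounds z1 z2 : inD z1 -> inD z2 -> 0 <= qval z1 z2 < 1.
Proof.
  intros H1 H2. split; [apply Cmod_ge_0|]. unfold qval.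
  assert (K := mob_key 1 (Copp z1) z2 Cmod_1 ltac:(rewrite Cmod_opp; exact H1) H2).
  replace (Cplus (Cmult 1 z2) (Copp z1)) with (Copp (Cminus z1 z2)) in K by ring.
  replace (Cplus 1 (Cmult (Cmult (Cconj (Copp z1)) 1) z2)) with (Cminus 1 (Cmult (Cconj z1) z2)) in K
    by (rewrite Copp_conj; ring).
  rewrite Cmod_opp in K.
  assert (N : Cminus 1 (Cmult (Cconj z1) z2) <> 0%C).
  { apply one_minus_nz. rewrite Cmod_mult, Cmod_conj. unfold inD in *.
    pose proof (Cmod_ge_0 z1). pose proof (Cmod_ge_0 z2). nra. }
  rewrite Cmod_div by exact N. apply Cmod_gt_0 in N.
  apply Rmult_lt_reg_r with (Cmod (Cminus 1 (Cmult (Cconj z1) z2))); [exact N|].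
  unfold Rdiv. rewrite Rmult_assoc, Rinv_l by lra. lra.
Qed.

Lemma inD_R (t : R) : 0 <= t < 1 -> inD (RtoC t).
Proof. intro H. unfold inD. rewrite Cmod_R, Rabs_pos_eq; lra. Qed.

Lemma Z_iff_q I (HI : AutG_invariant I) z1 z2 : inD z1 -> inD z2 ->
  (Zc I (symm z1 z2) <-> Zc I (symm (RtoC 0) (RtoC (qval z1 z2)))).
Proof.
  intros H1 H2. destruct (transit z1 z2 H1 H2) as (u & Hu & E1 & E2).
  assert (Ht := inD_R _ (qval_bounds z1 z2 H1 H2)).
  split; intro HZ.
  - assert (Hu' : Cmod (Cconj u) = 1) by (rewrite Cmod_conj; exact Hu).
    assert (Ha' : Cmod (Copp (Cmult (Cconj u) z1)) < 1) by (rewrite Cmod_opp, Cmod_mult, Hu'; unfold inD in H1; lra).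
    pose proof (Z_invariant I HI _ z1 z2 (mob_aut _ _ Hu' Ha') H1 H2 HZ) as R.
    assert (P1 := mob_inv u z1 (RtoC 0) Hu H1 inD0). rewrite E1 in P1.
    assert (P2 := mob_inv u z1 _ Hu H1 Ht). rewrite E2 in P2.
    rewrite P1, P2 in R. exact R.
  - pose proof (Z_invariant I HI _ _ _ (mob_aut u z1 Hu H1) inD0 Ht HZ) as R.
    rewrite E1, E2 in R. exact R.
Qed.


Lemma I_ext (I : (Gpt -> C) -> Prop) (f g : Gpt -> C) : I f -> (forall w, f w = g w) -> I g.
Proof. intros H E. replace g with f; auto. apply functional_extensionality. exact E. Qed.

Lemma fold_I (I : (Gpt -> C) -> Prop) {T : Type} (t : T -> Gpt -> R) (l : list T) :
  I (fun _ => RtoC 0) ->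
  (forall f g, I f -> I g -> I (fun w => Cplus (f w) (g w))) ->
  (forall i, I (fun w => RtoC (t i w))) ->
  I (fun w => RtoC (fold_right (fun i acc => t i w + acc) 0 l)).
Proof.
  intros H0 Hadd Ht. induction l as [|i l IH]; simpl; [exact H0|].
  eapply I_ext; [apply (Hadd _ _ (Ht i) IH)|].
  intro w. simpl. unfold Cplus, RtoC; simpl. f_equal; ring.
Qed.

Lemma approx I : closed_ideal I -> forall f, C0G f ->
  (forall w : Gpt, Zc I (proj1_sig w) -> f w = 0%C) -> I f.
Proof.
  intros HI f Hf Hz.
  destruct HI as (HC & H0 & Hadd & Hscal & Hmul & Hcl).
  apply Hcl; [exact Hf|]. intros eps Heps.
  destruct Hf as [Hfc Hfv].
  assert (Lloc : forall w : Gpt, f w <> 0%C -> exists g r, I g /\ 0 < r /\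
     forall w' : Gpt, dist2 (proj1_sig w) (proj1_sig w') < r -> 1/2 < Cmod (g w')).
  { intros w Hw.
    assert (NZ : ~ Zc I (proj1_sig w)) by (intro HZ; apply Hw; apply Hz; exact HZ).
    unfold Zc in NZ.
    apply not_all_ex_not in NZ. destruct NZ as [f0 NZ].
    apply imply_to_and in NZ. destruct NZ as [If0 NZ].
    apply not_all_ex_not in NZ. destruct NZ as [v NZ].
    apply imply_to_and in NZ. destruct NZ as [Hv NZ].
    apply Gpt_eq in Hv. subst v.
    set (g := fun x => Cmult (Cinv (f0 w)) (f0 x)).
    assert (Ig : I g) by (apply Hscal; exact If0).
    assert (g1 : g w = 1%C) by (unfold g; field; exact NZ).
    destruct (proj1 (HC g Ig) w (1/2)) as (d & Hd & Hg); [lra|].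
    exists g, d. split; auto. split; auto. intros w' Hw'.
    specialize (Hg w' Hw'). rewrite g1 in Hg.
    pose proof (Cmod_rev_tri 1 (g w')) as RT. rewrite Cmod_1 in RT.
    unfold Rabs in RT. destruct (Rcase_abs _); lra. }
  set (J := {w : Gpt | eps <= Cmod (f w)}).
  assert (Lsig : forall j : J, {p : (Gpt -> C) * R | I (fst p) /\ 0 < snd p /\
     forall w' : Gpt, dist2 (proj1_sig (proj1_sig j)) (proj1_sig w') < snd p -> 1/2 < Cmod (fst p w')}).
  { intro j. apply constructive_indefinite_description.
    destruct j as [w Hw]. simpl.
    assert (NZ : f w <> 0%C) by (intro E; rewrite E, Cmod_0 in Hw; lra).
    destruct (Lloc w NZ) as (g & r & A1 & A2 & A3). exists (g, r). simpl. auto. }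
  set (Gj := fun j => fst (proj1_sig (Lsig j))).
  set (Rj := fun j => snd (proj1_sig (Lsig j))).
  assert (PG : forall j, I (Gj j) /\ 0 < Rj j /\ forall w', dist2 (proj1_sig (proj1_sig j)) (proj1_sig w') < Rj j -> 1/2 < Cmod (Gj j w')).
  { intro j. unfold Gj, Rj. exact (proj2_sig (Lsig j)). }
  destruct (Hfv eps Heps) as (K & HK & HKG & HKo).
  set (U := fun (i : option J) (p : C * C) => match i with
     | None => exists r, 0 < r /\ forall w' : Gpt, dist2 p (proj1_sig w') < r -> Cmod (f w') < eps
     | Some j => dist2 (proj1_sig (proj1_sig j)) p < Rj j end).
  destruct (HK (option J) U) as [l Hl].
  { intros [j|] p Hp; simpl in Hp.
    - exists (Rj j - dist2 (proj1_sig (proj1_sig j)) p). split; [lra|].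
      intros p' Hp'. simpl. pose proof (dist2_tri (proj1_sig (proj1_sig j)) p p'). lra.
    - destruct Hp as (r & Hr & Hp). exists (r/2). split; [lra|].
      intros p' Hp'. simpl. exists (r/2). split; [lra|]. intros w' Hw'.
      apply Hp. pose proof (dist2_tri p p' (proj1_sig w')). lra. }
  { intros p Kp. set (wp := exist inG p (HKG p Kp) : Gpt).
    destruct (Rle_lt_dec eps (Cmod (f wp))) as [Hle|Hlt].
    - exists (Some (exist _ wp Hle)). simpl. rewrite dist2_refl. apply PG.
    - exists None. simpl. destruct (Hfc wp (eps - Cmod (f wp))) as (d & Hd & Hw); [lra|].
      exists d. split; auto. intros w' Hw'. specialize (Hw w' Hw').
      pose proof (Cmod_rev_tri (f wp) (f w')) as RT. unfold Rabs in RT. destruct (Rcase_abs _); lra. }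
  assert (Cov : forall w : Gpt, eps <= Cmod (f w) -> exists j : J, In (Some j) l /\ 1/2 < Cmod (Gj j w)).
  { intros w Hw. assert (Kw : K (proj1_sig w)).
    { destruct (classic (K (proj1_sig w))) as [k|k]; auto. specialize (HKo w k). lra. }
    destruct (Hl _ Kw) as ([j|] & Hin & Hu); simpl in Hu.
    - exists j. split; auto. apply (proj2 (proj2 (PG j))). exact Hu.
    - exfalso. destruct Hu as (r & Hr & Hu). specialize (Hu w). rewrite dist2_refl in Hu. specialize (Hu Hr). lra. }
  set (term := fun (i : option J) (w : Gpt) => match i with None => 0 | Some j => Cmod (Gj j w) ^ 2 end).
  set (hr := fun w => fold_right (fun i acc => term i w + acc) 0 l).
  assert (term_nn : forall w i, 0 <= term i w) by (intros w [j|]; simpl; [apply pow2_ge_0|lra]).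
  assert (hr_nn : forall w, 0 <= hr w) by (intro w; apply fold_nn; auto).
  assert (hr_big : forall w, eps <= Cmod (f w) -> 1/4 <= hr w).
  { intros w Hw. destruct (Cov w Hw) as (j & Hin & Hj).
    pose proof (fold_ge (fun i => term i w) l (Some j) (term_nn w) Hin) as Fg. simpl in Fg.
    unfold hr. pose proof (Cmod_ge_0 (Gj j w)). nra. }
  assert (C0conj : forall g, C0G g -> C0G (fun w => Cconj (g w))).
  { intros g [Hgc Hgv]. split; [apply cont_conj; auto|]. apply (vanish_le g); auto.
    intros e He. exists e. split; auto. intros w Hw. rewrite Cmod_conj. auto. }
  assert (Ih : I (fun w => RtoC (hr w))).
  { apply (fold_I I term l H0 Hadd). intros [j|]; simpl.
    - destruct (PG j) as [IG _].
      eapply I_ext; [apply (Hmul _ _ IG (C0conj _ (HC _ IG)))|].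
      intro w. simpl. rewrite Cmult_comm, <- Cmod2_conj. reflexivity.
    - exact H0. }
  set (hr2 := fun w => hr w * (1 + Cmod (f w) ^ 2)).
  assert (Isq : C0G (fun w => Cmult (Cconj (f w)) (f w))).
  { split. apply cont_mult; [apply cont_conj|]; auto.
    apply (vanish_le f); auto. intros e He. exists (Rmin 1 e). split; [apply Rmin_pos; lra|].
    intros w Hw. rewrite Cmod_mult, Cmod_conj.
    pose proof (Rmin_l 1 e). pose proof (Rmin_r 1 e). pose proof (Cmod_ge_0 (f w)). nra. }
  assert (Ih2 : I (fun w => RtoC (hr2 w))).
  { eapply I_ext; [apply (Hadd _ _ Ih (Hmul _ _ Ih Isq))|].
    intro w. simpl. rewrite (Cmult_comm (Cconj (f w))), <- Cmod2_conj. unfold hr2.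
    unfold Cplus, Cmult, RtoC; simpl. f_equal; ring. }
  assert (hr2_nn : forall w, 0 <= hr2 w).
  { intro w. unfold hr2. pose proof (hr_nn w). pose proof (pow2_ge_0 (Cmod (f w))). nra. }
  set (c := eps / 2).
  assert (Hc : 0 < c) by (unfold c; lra).
  set (k := fun w => Cmult (f w) (RtoC (/ (c + hr2 w)))).
  assert (Ck : C0G k).
  { split.
    - apply cont_mult; auto. apply cont_RtoC. apply (contR_inv _ c Hc).
      + intro w. pose proof (hr2_nn w). lra.
      + apply contR_plus_const. apply cont_ofC. exact (proj1 (HC _ Ih2)).
    - apply (vanish_le f); auto. intros e He. exists (e * c). split; [nra|].
      intros w Hw. unfold k. rewrite Cmod_mult, Cmod_R.
      pose proof (hr2_nn w). pose proof (Cmod_ge_0 (f w)).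
      rewrite Rabs_pos_eq by (apply Rlt_le, Rinv_0_lt_compat; lra).
      apply Rle_lt_trans with (Cmod (f w) * / c).
      + apply Rmult_le_compat_l; auto. apply Rinv_le_contravar; lra.
      + apply Rmult_lt_reg_r with c; auto. rewrite Rmult_assoc, Rinv_l by lra. lra. }
  exists (fun w => Cmult (k w) (RtoC (hr2 w))). split; [exact (Hmul _ _ Ih2 Ck)|].
  intro w. unfold k.
  pose proof (hr2_nn w) as HH.
  replace (Cminus (f w) (Cmult (Cmult (f w) (RtoC (/ (c + hr2 w)))) (RtoC (hr2 w))))
    with (Cmult (f w) (RtoC (c / (c + hr2 w)))).
  2: { unfold Cminus, Cplus, Copp, Cmult, RtoC; simpl. f_equal; field; lra. }
  rewrite Cmod_mult, Cmod_R, Rabs_pos_eq by (apply Rlt_le, Rdiv_lt_0_compat; lra).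
  pose proof (Cmod_ge_0 (f w)) as Fn.
  set (F := Cmod (f w)) in *. set (H := hr2 w) in *.
  assert (Q : c / (c + H) <= 1).
  { apply Rmult_le_reg_r with (c + H); [lra|]. unfold Rdiv. rewrite Rmult_assoc, Rinv_l by lra. lra. }
  destruct (Rlt_le_dec F eps) as [Hl1|Hl1].
  - apply Rle_trans with (F * 1); [apply Rmult_le_compat_l; auto|lra].
  - assert (HB : (1 + F ^ 2) / 4 <= H).
    { unfold H, hr2. pose proof (hr_big w Hl1). fold F. pose proof (pow2_ge_0 F). nra. }
    assert (HF : F <= 2 * H) by (pose proof (pow2_ge_0 (F - 1)); nra).
    unfold Rdiv. rewrite <- Rmult_assoc.
    apply Rmult_le_reg_r with (c + H); [lra|]. rewrite Rmult_assoc, Rinv_l by lra.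
    unfold c in *. nra.
Qed.


Definition Lam (I : (Gpt -> C) -> Prop) (t : R) : Prop :=
  0 <= t < 1 /\ Zc I (symm (RtoC 0) (RtoC t)).

Lemma small_zero (z : C) : (forall eps, 0 < eps -> Cmod z < eps) -> z = 0%C.
Proof.
  intro H. apply Cmod_eq_0. pose proof (Cmod_ge_0 z).
  destruct (Rle_lt_or_eq_dec 0 (Cmod z) H0) as [P|P]; [|auto].
  specialize (H _ P). lra.
Qed.

Theorem theorem4p1 :
  forall I : (Gpt -> C) -> Prop,
    closed_ideal I -> AutG_invariant I ->
    exists Lam : R -> Prop, closed_in_01 Lam /\
      forall f : Gpt -> C, I f <-> ideal_of (qpre Lam) f.
Proof.
  intros I HI HA. exists (Lam I). split.
  - split; [intros x [Hx _]; exact Hx|].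
    intros x Hx Happ. split; [exact Hx|].
    intros f Hf v Hv. apply small_zero. intros eps Heps.
    destruct HI as [HC _]. destruct (HC f Hf) as [Hcont _].
    destruct (Hcont v eps Heps) as (delta & Hd & Hdel).
    destruct (Happ delta Hd) as (y & [Hy HZy] & Hxy).
    assert (Gy : inG (symm (RtoC 0) (RtoC y))) by (exists (RtoC 0), (RtoC y); split; [apply inD0|]; split; [apply inD_R; exact Hy| reflexivity]).
    set (vy := exist inG _ Gy : Gpt).
    assert (D : dist2 (proj1_sig v) (proj1_sig vy) < delta).
    { rewrite Hv. simpl. unfold dist2, symm. simpl fst; simpl snd.
      replace (Cminus (Cplus (RtoC 0) (RtoC x)) (Cplus (RtoC 0) (RtoC y))) with (RtoC (x - y))
        by (unfold Cminus, Cplus, Copp, RtoC; simpl; f_equal; ring).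
      replace (Cminus (Cmult (RtoC 0) (RtoC x)) (Cmult (RtoC 0) (RtoC y))) with (RtoC 0)
        by (unfold Cminus, Cplus, Copp, Cmult, RtoC; simpl; f_equal; ring).
      rewrite Cmod_R, Cmod_0. unfold Rmax. destruct (Rle_dec (Rabs (x - y)) 0); [lra|exact Hxy]. }
    specialize (Hdel vy D). rewrite (HZy f Hf vy eq_refl) in Hdel.
    replace (Cminus (f v) 0%C) with (f v) in Hdel by ring. exact Hdel.
  - intro f. split.
    + intro Hf. split; [exact (proj1 HI f Hf)|].
      intros w (z1 & z2 & H1 & H2 & Hw & [Hq HZ]).
      apply (proj2 (Z_iff_q I HA z1 z2 H1 H2) HZ f Hf w Hw).
    + intros [Hf Hz]. apply approx; auto.
      intros w HZ. apply Hz. destruct (proj2_sig w) as (z1 & z2 & H1 & H2 & Hw).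
      exists z1, z2. split; [auto|]. split; [auto|]. split; [auto|].
      split; [apply qval_bounds; auto|].
      rewrite Hw in HZ. apply (proj1 (Z_iff_q I HA z1 z2 H1 H2) HZ).
Qed.
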